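(* Let $\hat v\in\{0,1\}^{\mathcal T}$ be the indicator vector of a proper triple set. Then the optimal objective value of the linear program $\mathrm{LP}(\hat v)$: minimize $\sum_{J\in\mathcal N}\beta_J y_J$ over $y\in[0,1]^{\mathcal N}$ subject to, for every triple $t=(J,J',J'')\in\mathcal T$, $y_{J''}-y_J\le 1-\hat v_t$, $y_{J''}-y_{J'}\le 1-\hat v_t$, $y_J+y_{J'}-y_{J''}\le 2-\hat v_t$, lies in the interval $[-\eta,0]$, where $\eta=-\sum_{i=1}^m\min(0,\alpha_i)$.
   Context: A multilinear program has data $n,m$, coefficients $\alpha_i\in\mathbb{R}$ and nonempty index sets $J_i\subseteq[n]$ ($i\in[m]$). Let $\mathcal N=\bigcup_i\{J:\emptyset\ne J\subseteq J_i\}$, and for $J\in\mathcal N$ let $\beta_J=\sum_{i: J_i=J}\alpha_i$ (so $\sum_J\beta_Jy_J=\sum_i\alpha_iy_{J_i}$). A triple is $t=(J,J',J'')$ with $J''\in\mathcal N$, $|J''|\ge2$, $J,J'$ nonempty, disjoint, $J\cup J'=J''$, listed with $J,J'$ in lexicographic order ($\mathsf{tail1}(t)=J$, $\mathsf{tail2}(t)=J'$, $\mathsf{head}(t)=J''$); $\mathcal T$ is the set of all triples. A proper triple set is a set $T\subseteq\mathcal T$ containing a subset $T'$ such that (1) every $J_i$ with $|J_i|>1$ is the head of some triple in $T'$, and (2) whenever a set $J$ with $|J|>1$ is the first or second element of a triple in $T'$, $J$ is the head of a different triple in $T'$. Its indicator vector has $\hat v_t=1$ iff $t\in T$. *)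

(* Defs.v *)
From HB Require Import structures.
From mathcomp Require Import all_boot all_order all_algebra.
From mathcomp Require Import reals.
Set Implicit Arguments. Unset Strict Implicit. Unset Printing Implicit Defensive.
Import Order.TTheory GRing.Theory Num.Theory.
Local Open Scope ring_scope.

Section MLP.
Variables (n m : nat) (Js : 'I_m -> {set 'I_n}).

Fixpoint lexlt (s t : seq nat) : bool :=
  match s, t with
  | _, [::] => false
  | [::], _ :: _ => true
  | a :: s', b :: t' => (a < b)%N || ((a == b) && lexlt s' t')
  end.

Definition set_lexlt (A B : {set 'I_n}) : bool :=
  lexlt (sort leq [seq val i | i <- enum A]) (sort leq [seq val i | i <- enum B]).

Definition inN (J : {set 'I_n}) : bool := (J != set0) && [exists i, J \subset Js i].

Definition beta (R : numDomainType) (alpha : 'I_m -> R) (J : {set 'I_n}) : R :=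
  \sum_(i | Js i == J) alpha i.

Definition triple := ({set 'I_n} * {set 'I_n} * {set 'I_n})%type.
Definition tail1 (t : triple) : {set 'I_n} := t.1.1.
Definition tail2 (t : triple) : {set 'I_n} := t.1.2.
Definition head (t : triple) : {set 'I_n} := t.2.

Definition is_triple (t : triple) : bool :=
  [&& inN (head t), (2 <= #|head t|)%N, tail1 t != set0, tail2 t != set0,
      [disjoint tail1 t & tail2 t], tail1 t :|: tail2 t == head t &
      set_lexlt (tail1 t) (tail2 t)].

Definition calT : {set triple} := [set t | is_triple t].

Definition proper_triple_set (T : {set triple}) : Prop :=
  T \subset calT /\
  exists T' : {set triple}, T' \subset T /\
    (forall i, (1 < #|Js i|)%N -> exists2 t, t \in T' & head t = Js i) /\
    (forall t, t \in T' ->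
       forall J, (J = tail1 t \/ J = tail2 t) -> (1 < #|J|)%N ->
         exists2 t', (t' \in T') && (t' != t) & head t' = J).

(* feasibility in LP(v_hat), v_hat the indicator of T; y indexed by N
   (values of y outside N are irrelevant). *)
Definition feasible (R : numDomainType) (T : {set triple}) (y : {set 'I_n} -> R) : Prop :=
  (forall J, inN J -> 0 <= y J <= 1) /\
  (forall t, t \in calT ->
     let v : R := (t \in T)%:R in
     [/\ y (head t) - y (tail1 t) <= 1 - v,
         y (head t) - y (tail2 t) <= 1 - v &
         y (tail1 t) + y (tail2 t) - y (head t) <= 2 - v]).

Definition objective (R : numDomainType) (alpha : 'I_m -> R) (y : {set 'I_n} -> R) : R :=
  \sum_(J | inN J) beta alpha J * y J.

Definition eta_val (R : realDomainType) (alpha : 'I_m -> R) : R :=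
  - \sum_i Num.min 0 (alpha i).

End MLP.

(* Main.v *)
Require Import Defs.
From HB Require Import structures.
From mathcomp Require Import all_boot all_order all_algebra.
From mathcomp Require Import reals.
From mathcomp Require Import all_classical all_reals all_analysis.
Import Order.TTheory GRing.Theory Num.Theory.
Import numFieldNormedType.Exports.
Local Open Scope ring_scope.
Local Open Scope classical_set_scope.
Module M. Import ArrowAsProduct. Section S.
Variables (R : realType) (I : eqType).
Lemma cont_proj (a : I) : continuous (fun y : I -> R => y a).
Proof. exact: (@proj_continuous I (fun _ => R) a). Qed.

Lemma cont_lin (a b : I) : continuous (fun y : I -> R => y a - y b).
Proof. move=> y. have := @continuousB R R^o (I -> R) (fun y => y a) (fun y => y b) y.
apply; exact: cont_proj. Qed.

Lemma cont_lin3 (a b c : I) : continuous (fun y : I -> R => y a + y b - y c).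
Proof. move=> y.
have := @continuousB R R^o (I -> R) (fun y => y a + y b) (fun y => y c) y; apply; last exact: cont_proj.
have := @continuousD R R^o (I -> R) (fun y => y a) (fun y => y b) y; apply; exact: cont_proj.
Qed.

Lemma cont_sum (r : seq I) (P : pred I) (c : I -> R) :
  continuous (fun y : I -> R => \sum_(J <- r | P J) c J * y J).
Proof.
elim: r => [|a r IH].
  have -> : (fun y : I -> R => \sum_(J <- [::] | P J) c J * y J) = fun _ => 0.
    by apply: funext => y; rewrite big_nil.
  exact: cst_continuous.
case: (boolP (P a)) => Pa.
  have -> : (fun y : I -> R => \sum_(J <- a :: r | P J) c J * y J) = fun y => c a * y a + \sum_(J <- r | P J) c J * y J.
    by apply: funext => y; rewrite big_cons Pa.
  move=> y. have := @continuousD R R^o (I -> R) (fun y => c a * y a) (fun y => \sum_(J <- r | P J) c J * y J) y; apply; last exact: IH.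
  have := @continuousM R (I -> R) (fun _ => c a) (fun y => y a) y; apply; [exact: cst_continuous | exact: cont_proj].
have -> : (fun y : I -> R => \sum_(J <- a :: r | P J) c J * y J) = fun y => \sum_(J <- r | P J) c J * y J.
  by apply: funext => y; rewrite big_cons (negbTE Pa).
exact: IH.
Qed.

Lemma closed_le_fun (g : (I -> R) -> R) (k : R) : continuous g -> closed [set y | g y <= k].
Proof. move=> cg. have -> : [set y | g y <= k] = g @^-1` [set x | x <= k] by [].
apply: preimage_closed; [move=> ? _; exact: cg | exact: closed_le]. Qed.

Lemma box_compact : compact [set y : I -> R | forall J, `[0, 1] (y J)].
Proof. apply: (@tychonoff I (fun _ => R) (fun _ => `[0,1])) => _; exact: segment_compact. Qed.

Lemma closed_ge_fun (g : (I -> R) -> R) (k : R) : continuous g -> closed [set y | k <= g y].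
Proof. move=> cg. have -> : [set y | k <= g y] = g @^-1` [set x | k <= x] by [].
apply: preimage_closed; [move=> ? _; exact: cg | exact: closed_ge]. Qed.

Lemma exists_min (F : set (I -> R)) (obj : (I -> R) -> R) (y0 : I -> R) :
  closed F -> continuous obj -> F y0 -> (forall J, `[0, 1] (y0 J)) ->
  exists c, (forall J, `[0, 1] (c J)) /\ F c /\
    forall y, (forall J, `[0, 1] (y J)) -> F y -> obj c <= obj y.
Proof.
move=> cF cobj Fy0 By0.
have K0 : ([set y : I -> R | forall J, `[0, 1] (y J)] `&` F) !=set0 by exists y0.
have cK := compact_closedI (@box_compact) cF.
have cw : {within [set y : I -> R | forall J, `[0, 1] (y J)] `&` F, continuous obj} by apply: continuous_subspaceT.
have [c /set_mem [Bc Fc] H] := @compact_EVT_min _ R obj _ K0 cK cw.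
exists c; split => //; split => // y By Fy; apply: H; exact/mem_set.
Qed.
End S.

Lemma closed_feasible (R : realType) n m (Js : 'I_m -> {set 'I_n}) (T : {set triple n}) :
  closed [set y : {set 'I_n} -> R | feasible Js T y].
Proof.
have -> : [set y : {set 'I_n} -> R | feasible Js T y] =
  (\bigcap_(J in [set J | inN Js J]) ([set y | 0 <= y J] `&` [set y | y J <= 1])) `&`
  \bigcap_(t in [set t | t \in calT Js]) (
    [set y | y (Defs.head t) - y (tail1 t) <= 1 - (t \in T)%:R] `&`
    [set y | y (Defs.head t) - y (tail2 t) <= 1 - (t \in T)%:R] `&`
    [set y | y (tail1 t) + y (tail2 t) - y (Defs.head t) <= 2 - (t \in T)%:R]).
  rewrite predeqE => y; split.
    case=> H1 H2; split => [J /= HJ | t /= Ht].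
      by have /andP[? ?] := H1 J HJ.
    by have [? ? ?] := H2 t Ht.
  case=> H1 H2; split => [J HJ | t Ht].
    by have [/= ? ?] := H1 J HJ; apply/andP.
  by have [[/= ? ?] ?] := H2 t Ht.
apply: closedI; apply: closed_bigI => ? _.
  apply: closedI; [apply: closed_ge_fun | apply: closed_le_fun]; exact: cont_proj.
apply: closedI; [apply: closedI|]; apply: closed_le_fun;
  [exact: cont_lin | exact: cont_lin | exact: cont_lin3].
Qed.

Lemma cont_obj (R : realType) n m (Js : 'I_m -> {set 'I_n}) (alpha : 'I_m -> R) :
  continuous (fun y : {set 'I_n} -> R => objective Js alpha y).
Proof. rewrite /objective. exact: cont_sum. Qed.
End M.

Local Close Scope classical_set_scope.
From mathcomp Require Import all_boot all_order all_algebra.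
Import Order.TTheory GRing.Theory Num.Theory.

Theorem lemma1 (R : realType) (n m : nat) (alpha : 'I_m -> R)
  (Js : 'I_m -> {set 'I_n}) (HJ : forall i, Js i != set0)
  (T : {set triple n}) (HT : proper_triple_set Js T) :
  exists y : {set 'I_n} -> R,
    feasible Js T y /\
    (forall y' : {set 'I_n} -> R, feasible Js T y' ->
       objective Js alpha y <= objective Js alpha y') /\
    - eta_val alpha <= objective Js alpha y <= 0.
Proof.
have F0 : feasible Js T (fun _ => 0 : R).
  split => [J _|t _]; first by rewrite lexx ler01.
  by case: (t \in T); rewrite /= subrr ?subr_ge0 ?ler01 ?subr0 ?addr0 ?ler0n.
have B0 : forall J : {set 'I_n}, `[0, 1]%classic ((fun _ => 0 : R) J).
  by move=> J; change ((0:R) \in `[0, 1]%R); rewrite in_itv /= lexx ler01.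
have [c [Bc [Fc Hc]]] := @M.exists_min R _ _ _ _ (@M.closed_feasible R _ _ Js T) (@M.cont_obj R _ _ Js alpha) F0 B0.
have opt : forall y', feasible Js T y' -> objective Js alpha c <= objective Js alpha y'.
  move=> y' Fy'.
  pose y'' := fun J => if inN Js J then y' J else 0.
  have inN_tails : forall t, t \in calT Js ->
      [/\ inN Js (Defs.head t), inN Js (tail1 t) & inN Js (tail2 t)].
    move=> t; rewrite inE => /and5P[hN _ t1 t2 /and3P[_ /eqP U _]].
    move: hN => /andP[_ /existsP[i Hi]].
    rewrite /inN t1 t2 /=; split.
    - by apply/andP; split; [rewrite -U setU_eq0 negb_and t1| apply/existsP; exists i].
    - by apply/existsP; exists i; rewrite (subset_trans _ Hi) // -U subsetUl.
    - by apply/existsP; exists i; rewrite (subset_trans _ Hi) // -U subsetUr.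
  have -> : objective Js alpha y' = objective Js alpha y''.
    by apply: eq_bigr => J HJN; rewrite /y'' HJN.
  apply: Hc.
    move=> J; change (y'' J \in `[0, 1]%R); rewrite /y'' in_itv /=; case: ifP => HJN; last by rewrite lexx ler01.
    by case: Fy' => H _; exact: H.
  case: Fy' => H1 H2; split => [J HJN | t Ht].
    by rewrite /y'' HJN; exact: H1.
  have [h1 h2 h3] := inN_tails t Ht.
  by rewrite /y'' h1 h2 h3; exact: H2.
exists c; split => //; split => //.
apply/andP; split; last first.
  have := opt _ F0; suff -> : objective Js alpha (fun _ => 0 : R) = 0 by [].
  by apply: big1 => J _; rewrite mulr0.
have -> : objective Js alpha c = \sum_i alpha i * c (Js i).
  rewrite /objective /beta.
  under eq_bigr do rewrite mulr_suml.
  rewrite (exchange_big_dep (fun _ => true)) //=.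
  apply: eq_bigr => i _.
  rewrite (big_pred1 (Js i)) // => J /=.
  case: (eqVneq (Js i) J) => [<-|]; last by rewrite andbF.
  rewrite andbT /inN HJ /=; apply/existsP; exists i; exact: subxx.
rewrite /eta_val opprK; apply: ler_sum => i _.
have : c (Js i) \in `[0, 1]%R := Bc (Js i); rewrite in_itv /= => /andP[c0 c1].
case: (leP 0 (alpha i)) => ha.
  by rewrite mulr_ge0.

by rewrite -[X in X <= _]mulr1 ler_wnM2l // ltW.
Qed.
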